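(* Consider a Markov decision process with continuous state space $\mathcal{S}$, continuous action space $\mathcal{A}$, transition density $p(\mathbf{s}'|\mathbf{s},\mathbf{a})$ and discount factor $\gamma\in(0,1)$, and let $r_1, r_2$ be bounded reward functions. Let $Q_1^*$ and $Q_2^*$ be the optimal soft Q-functions (temperature $1$) for the rewards $r_1$ and $r_2$, with optimal soft policies $\pi_i^*(\mathbf{a}|\mathbf{s}) \propto \exp(Q_i^*(\mathbf{s},\mathbf{a}))$, $i=1,2$. Define $Q_\Sigma \triangleq \frac{1}{2}(Q_1^*+Q_2^* )$ and $r_\mathcal{C}\triangleq \frac{1}{2}(r_1+r_2)$, and let $Q_\mathcal{C}^*$ be the optimal soft Q-function for the reward $r_\mathcal{C}$. Then for all $\mathbf{s}\in\mathcal{S}$ and all $\mathbf{a}\in\mathcal{A}$, $$Q_\Sigma(\mathbf{s},\mathbf{a}) \ge Q_\mathcal{C}^*(\mathbf{s},\mathbf{a}) \ge Q_\Sigma(\mathbf{s},\mathbf{a}) - C^*(\mathbf{s},\mathbf{a}),$$ where $C^*$ is the fixed point of the iteration $$C(\mathbf{s},\mathbf{a}) \leftarrow \gamma\, \mathbb{E}_{\mathbf{s}'\sim p(\mathbf{s}'|\mathbf{s},\mathbf{a})}\Big[ D_{1/2}\big(\pi_1^*(\cdot|\mathbf{s}')\,\|\,\pi_2^*(\cdot|\mathbf{s}')\big) + \max_{\mathbf{a}'\in\mathcal{A}} C(\mathbf{s}',\mathbf{a}')\Big],$$ and $D_{1/2}$ denotes the Rényi divergence of order $1/2$.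
   Context: Soft (maximum-entropy) reinforcement learning with temperature $1$: for a bounded reward $r$, the soft Bellman backup maps a bounded function $Q$ on $\mathcal{S}\times\mathcal{A}$ to $r(\mathbf{s},\mathbf{a}) + \gamma\,\mathbb{E}_{\mathbf{s}'\sim p(\mathbf{s}'|\mathbf{s},\mathbf{a})}[V(\mathbf{s}')]$, where $V(\mathbf{s}) = \log\int_{\mathcal{A}} \exp(Q(\mathbf{s},\mathbf{a}))\,d\mathbf{a}$. This backup is a contraction, and the optimal soft Q-function $Q^*$ for reward $r$ is its unique fixed point; the corresponding optimal soft policy is $\pi^*(\mathbf{a}|\mathbf{s}) = \exp(Q^*(\mathbf{s},\mathbf{a}) - V^*(\mathbf{s}))$. The Rényi divergence of order $1/2$ between densities $p,q$ is $D_{1/2}(p\|q) = -2\log\int \sqrt{p(\mathbf{a})q(\mathbf{a})}\,d\mathbf{a}$. *)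

(* Defs.v *)
From HB Require Import structures.
From mathcomp Require Import all_boot all_order all_algebra.
From mathcomp Require Import all_classical all_reals all_analysis.
Set Implicit Arguments.
Unset Strict Implicit.
Unset Printing Implicit Defensive.
Import Order.TTheory GRing.Theory Num.Theory.
Local Open Scope classical_set_scope.
Local Open Scope ring_scope.

Section SoftRL.
Context (R : realType) (dS dA : measure_display)
  (S : measurableType dS) (A : measurableType dA)
  (mu : {finite_measure set A -> \bar R})     (* base measure "da" on actions *)
  (P : S -> A -> probability S R)
  (gamma : R).

Definition bounded_SA (f : S -> A -> R) := exists M : R, forall s a, `|f s a| <= M.

Definition softV (Q : S -> A -> R) (s : S) : R :=
  ln (Rintegral mu setT (fun a => expR (Q s a))).

Definition expect (s : S) (a : A) (f : S -> R) : R := Rintegral (P s a) setT f.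

Definition soft_backup (r Q : S -> A -> R) (s : S) (a : A) : R :=
  r s a + gamma * expect s a (softV Q).

(* Q is the optimal soft Q-function for reward r: the (unique) bounded,
   measurable fixed point of the soft Bellman backup *)
Definition is_opt_softQ (r Q : S -> A -> R) :=
  [/\ bounded_SA Q,
      measurable_fun setT (fun x : S * A => Q x.1 x.2) &
      forall s a, Q s a = soft_backup r Q s a].

Definition soft_policy (Q : S -> A -> R) (s : S) (a : A) : R :=
  expR (Q s a - softV Q s).

Definition renyi_half (p q : A -> R) : R :=
  - 2 * ln (Rintegral mu setT (fun a => Num.sqrt (p a * q a))).

Definition C_integrand (Q1 Q2 C : S -> A -> R) (s' : S) : R :=
  renyi_half (soft_policy Q1 s') (soft_policy Q2 s') + sup (range (C s')).

Definition C_backup (Q1 Q2 C : S -> A -> R) (s : S) (a : A) : R :=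
  gamma * expect s a (C_integrand Q1 Q2 C).

Definition is_C_fixpoint (Q1 Q2 C : S -> A -> R) :=
  [/\ bounded_SA C,
      measurable_fun setT (C_integrand Q1 Q2 C) &
      forall s a, C s a = C_backup Q1 Q2 C s a].

End SoftRL.

(* Main.v *)
Require Import Defs.
From HB Require Import structures.
From mathcomp Require Import all_boot all_order all_algebra.
From mathcomp Require Import all_classical all_reals all_analysis.
Import Order.TTheory GRing.Theory Num.Theory.
From mathcomp Require Import measurable_realfun.
From mathcomp Require Import ring lra.
Local Open Scope classical_set_scope.
Local Open Scope ring_scope.
Set Implicit Arguments.
Unset Strict Implicit.

Definition good (R : realType) d (T : measurableType d) (f : T -> R) :=
  measurable_fun setT f /\ exists M : R, forall x, `|f x| <= M.

Lemma good_int (R : realType) d (T : measurableType d)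
  (m : {finite_measure set T -> \bar R}) (f : T -> R) :
  good f -> m.-integrable setT (EFin \o f).
Proof.
move=> [mf [M hM]]; apply: measurable_bounded_integrable => //.
  exact: fin_num_fun_lty (fin_num_measure m).
exists M; split; first exact: num_real.
by move=> r Mr x _; apply: le_trans (hM x) (ltW Mr).
Qed.

Section good.
Context (R : realType) d (T : measurableType d).
Implicit Types f g : T -> R.

Lemma good_cst (c : R) : good (fun _ : T => c).
Proof. split; first exact: measurable_cst. by exists `|c|. Qed.

Lemma good_add f g : good f -> good g -> good (fun x => f x + g x).
Proof.
move=> [mf [M hM]] [mg [N hN]]; split; first exact: measurable_realfun.measurable_funD.
exists (M + N) => x; apply: le_trans (ler_normD _ _) _; exact: lerD.
Qed.

Lemma good_scale (k : R) f : good f -> good (fun x => k * f x).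
Proof.
move=> [mf [M hM]]; split.
  by apply: measurable_realfun.measurable_funM => //; exact: measurable_cst.
exists (`|k| * M) => x; rewrite normrM; exact: ler_wpM2l.
Qed.

Lemma good_opp f : good f -> good (fun x => - f x).
Proof.
move=> gf; have := good_scale (-1) gf.
by under eq_fun do rewrite mulN1r.
Qed.

Variable P : {finite_measure set T -> \bar R}.

Lemma E_le f g : good f -> good g -> (forall x, f x <= g x) ->
  Rintegral P setT f <= Rintegral P setT g.
Proof.
move=> gf gg fg; apply: le_Rintegral => //; exact: good_int.
Qed.

Lemma E_add f g : good f -> good g ->
  Rintegral P setT (fun x => f x + g x) = Rintegral P setT f + Rintegral P setT g.
Proof. move=> gf gg; apply: RintegralD => //; exact: good_int. Qed.

Lemma E_scale (k : R) f : good f ->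
  Rintegral P setT (fun x => k * f x) = k * Rintegral P setT f.
Proof. move=> gf; apply: RintegralZl => //; exact: good_int. Qed.

Lemma E_cst (Pr : probability T R) (c : R) : Rintegral Pr setT (fun _ => c) = c.
Proof.
rewrite Rintegral_cst // -[RHS]mulr1; congr (c * _); exact: (congr1 fine (probability_setT Pr)).
Qed.

End good.


Section soft.
Context (R : realType) (dS dA : measure_display)
  (S : measurableType dS) (A : measurableType dA)
  (mu : {finite_measure set A -> \bar R}).
Hypothesis mu0 : (0 < mu setT)%E.

Definition goodQ (Q : S -> A -> R) :=
  bounded_SA Q /\ measurable_fun setT (fun x : S * A => Q x.1 x.2).

Definition II (Q : S -> A -> R) s := Rintegral mu setT (fun a => expR (Q s a)).

Lemma sec_good Q s : goodQ Q -> good (fun a => expR (Q s a)).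
Proof.
move=> [[M hM] mQ]; split.
  apply: measurableT_comp; first exact: measurable_realfun.measurable_expR.
  exact: (measurable_fun_pair2 s mQ).
exists (expR M) => a; rewrite gtr0_norm ?expR_gt0 // ler_expR.
exact: le_trans (ler_norm _) (hM s a).
Qed.

Lemma II_pos Q s : goodQ Q -> 0 < II Q s.
Proof.
move=> gQ; have [[M hM] _] := gQ.
have h : Rintegral mu setT (fun _ => expR (- M)) <= II Q s.
  apply: E_le; [exact: good_cst | exact: sec_good |].
  move=> a; rewrite ler_expR; have := hM s a; rewrite ler_norml.
  by case/andP.
apply: lt_le_trans h; rewrite Rintegral_cst //.
apply: mulr_gt0; first exact: expR_gt0.
apply: fine_gt0; rewrite mu0 /=.
exact: fin_num_fun_lty (fin_num_measure mu).
Qed.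

Lemma softV_mono Q Q' c s : goodQ Q -> goodQ Q' ->
  (forall a, Q s a <= Q' s a + c) -> softV mu Q s <= softV mu Q' s + c.
Proof.
move=> gQ gQ' h.
have h1 : II Q s <= expR c * II Q' s.
  rewrite /II -E_scale; last exact: sec_good.
  apply: E_le; [exact: sec_good | apply: good_scale; exact: sec_good |].
  by move=> a; rewrite -expRD ler_expR addrC.
have p1 := II_pos s gQ; have p2 := II_pos s gQ'.
rewrite /softV -/(II Q s) -/(II Q' s).
apply: (@le_trans _ _ (ln (expR c * II Q' s))).
  by rewrite ler_ln // posrE // mulr_gt0 // expR_gt0.
by rewrite lnM ?posrE ?expR_gt0 // expRK addrC.
Qed.

Lemma goodQ_cst (c : R) : goodQ (fun _ _ => c).
Proof. split; [by exists `|c| | exact: measurable_cst]. Qed.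

Lemma softV_good Q : goodQ Q -> good (softV mu Q).
Proof.
move=> gQ; have [[M hM] mQ] := gQ; split.
  have mf : measurable_fun setT (EFin \o (fun x : S * A => expR (Q x.1 x.2))).
    apply/measurable_EFinP.
    apply: (measurableT_comp (f := expR) (g := fun x : S * A => Q x.1 x.2)) => //.
  have f0 : forall x : S * A, (0 <= (EFin \o (fun x : S * A => expR (Q x.1 x.2))) x)%E by move=> x; rewrite lee_fin ltW ?expR_gt0.
  have mF := measurable_fun_fubini_tonelli_F (m2 := mu) _ mf f0.
  apply: measurableT_comp; first exact: measurable_realfun.measurable_ln.
  apply: measurableT_comp mF.
  exact: measurable_realfun.fine_measurable.
exists (M + `|softV mu (fun _ _ => 0) (@point S)|) => s.
set L := softV mu (fun _ _ => 0) (@point S).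
have eL : softV mu (fun _ _ => 0) s = L.
  by rewrite /L /softV !Rintegral_cst.
have h1 : softV mu Q s <= L + M.
  rewrite -eL; apply: softV_mono => //; first exact: goodQ_cst.
  move=> a; rewrite add0r; exact: le_trans (ler_norm _) (hM s a).
have h2 : L <= softV mu Q s + M.
  rewrite -eL; apply: softV_mono => //; first exact: goodQ_cst.
  move=> a; have := hM s a; rewrite ler_norml => /andP[h _].
  by rewrite -lerBlDr sub0r.
rewrite ler_norml; have := ler_norm L; have := ler_norm (- L); rewrite normrN.
move=> hL1 hL2; apply/andP; split; lra.
Qed.

Lemma goodQ_avg Q1 Q2 : goodQ Q1 -> goodQ Q2 ->
  goodQ (fun s a => (Q1 s a + Q2 s a) / 2).
Proof.
move=> [[M1 h1] m1] [[M2 h2] m2]; split.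
  exists ((M1 + M2) / 2) => s a; rewrite normrM (ger0_norm (_ : 0 <= 2^-1)) //.
  rewrite ler_pM2r //; apply: le_trans (ler_normD _ _) _; exact: lerD.
apply: measurable_funM => //; exact: measurable_funD.
Qed.

Lemma amgm (x y t : R) : 0 < t ->
  2 * expR ((x + y) / 2) <= t * expR x + t^-1 * expR y.
Proof.
move=> t0.
have hp : expR ((x + y) / 2) * expR ((x + y) / 2) = expR x * expR y.
  by rewrite -!expRD; congr expR; field.
have X0 := expR_gt0 x; have Y0 := expR_gt0 y; have p0 := expR_gt0 ((x + y) / 2).
move: hp; set X := expR x; set Y := expR y; set p := expR _ => hp.
have ti : t^-1 * t = 1 by rewrite mulVf // gt_eqF.
have ti0 : 0 < t^-1 by rewrite invr_gt0.
set u := t^-1 in ti ti0 *.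
have key : 0 <= X * (t * t * X + Y - 2 * p * t).
  have -> : X * (t * t * X + Y - 2 * p * t) = (t * X - p) ^+ 2.
    rewrite [RHS](_ : _ = t * t * X * X - 2 * t * X * p + p * p); last first.
      by rewrite expr2; ring.
    by rewrite hp; ring.
  exact: sqr_ge0.
have k2 : 0 <= t * t * X + Y - 2 * p * t.
  by rewrite -(pmulr_rge0 _ X0).
have k3 : 0 <= u * (t * t * X + Y - 2 * p * t) by rewrite mulr_ge0 // ltW.
have e : u * (t * t * X + Y - 2 * p * t) = (u * t) * (t * X) + u * Y - 2 * p * (u * t).
  by ring.
rewrite e ti in k3; lra.
Qed.

Lemma softV_CS Q1 Q2 s : goodQ Q1 -> goodQ Q2 ->
  softV mu (fun s a => (Q1 s a + Q2 s a) / 2) s <= (softV mu Q1 s + softV mu Q2 s) / 2.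
Proof.
move=> g1 g2; have gS := goodQ_avg g1 g2.
have J0 := II_pos s gS; have I10 := II_pos s g1; have I20 := II_pos s g2.
set J := II _ s in J0; set I1 := II Q1 s in I10; set I2 := II Q2 s in I20.
set t := J / I1.
have t0 : 0 < t by rewrite divr_gt0.
have h : 2 * J <= t * I1 + t^-1 * I2.
  have e1 : 2 * J = Rintegral mu setT
      (fun a => 2 * expR ((Q1 s a + Q2 s a) / 2)).
    by rewrite E_scale //; exact: (sec_good s gS).
  have e2 : t * I1 + t^-1 * I2 = Rintegral mu setT
      (fun a => t * expR (Q1 s a) + t^-1 * expR (Q2 s a)).
    rewrite E_add; last 2 first.
    - by apply: good_scale; exact: sec_good.
    - by apply: good_scale; exact: sec_good.
    by rewrite !E_scale //; exact: sec_good.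
  rewrite e1 e2; apply: E_le.
  - by apply: good_scale; exact: (sec_good s gS).
  - by apply: good_add; apply: good_scale; exact: sec_good.
  by move=> a; exact: amgm.
have hJ : J * J <= I1 * I2.
  move: h; rewrite /t divfK ?gt_eqF // invf_div.
  move=> h.
  have : J <= I1 / J * I2 by lra.
  rewrite -(ler_pM2r J0) => h2; apply: le_trans h2 _.
  by rewrite mulrAC divfK ?gt_eqF.
have : ln (J * J) <= ln (I1 * I2).
  by rewrite ler_ln ?posrE ?mulr_gt0.
rewrite !lnM ?posrE //.
change (ln J + ln J <= ln I1 + ln I2 -> ln J <= (ln I1 + ln I2) / 2).
clear; move: (ln J) (ln I1) (ln I2) => x y z; lra.
Qed.

Lemma renyiE Q1 Q2 s : goodQ Q1 -> goodQ Q2 ->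
  renyi_half mu (soft_policy mu Q1 s) (soft_policy mu Q2 s) =
  softV mu Q1 s + softV mu Q2 s - 2 * softV mu (fun s a => (Q1 s a + Q2 s a) / 2) s.
Proof.
move=> g1 g2; have gS := goodQ_avg g1 g2.
set V1 := softV mu Q1 s; set V2 := softV mu Q2 s.
set VS := softV mu _ s.
have e : forall a, Num.sqrt (soft_policy mu Q1 s a * soft_policy mu Q2 s a) =
    expR (- ((V1 + V2) / 2)) * expR ((Q1 s a + Q2 s a) / 2).
  move=> a; rewrite /soft_policy -/V1 -/V2 -!expRD.
  set z := (X in expR X).
  set w := (- ((V1 + V2) / 2) + (Q1 s a + Q2 s a) / 2).
  have -> : z = w + w by rewrite /z /w; field.
  rewrite expRD -expr2 sqrtr_sqr gtr0_norm //.
  exact: expR_gt0.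
rewrite /renyi_half (eq_Rintegral _ (fun a _ => e a)) E_scale; last exact: (sec_good s gS).
have I0 := II_pos s gS.
rewrite lnM ?posrE ?expR_gt0 // expRK.
change (-2 * (- ((V1 + V2) / 2) + VS) = V1 + V2 - 2 * VS).
by field.
Qed.

End soft.

Lemma sup_range_ub (R : realType) (T : Type) (c : T -> R) (M : R) x :
  (forall y, `|c y| <= M) -> c x <= sup (range c).
Proof.
move=> hM; apply: ub_le_sup; last by exists x.
exists M => _ [y _ <-]; exact: le_trans (ler_norm _) (hM y).
Qed.

Lemma sup_range_bd (R : realType) (T : Type) (c : T -> R) (M : R) (x0 : T) :
  (forall y, `|c y| <= M) -> `|sup (range c)| <= M.
Proof.
move=> hM; rewrite ler_norml; apply/andP; split.
  apply: le_trans (sup_range_ub x0 hM).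
  by have := hM x0; rewrite ler_norml => /andP[].
apply: ge_sup; first by exists (c x0), x0.
by move=> _ [y _ <-]; exact: le_trans (ler_norm _) (hM y).
Qed.

Lemma contr (R : realType) (S A : Type) (h : S -> A -> R) (g : R) (s0 : S) (a0 : A) :
  0 < g < 1 -> (exists M, forall s a, `|h s a| <= M) ->
  (forall s a, h s a <= g * sup (range (fun x : S * A => h x.1 x.2))) ->
  forall s a, h s a <= 0.
Proof.
move=> /andP[g0 g1] [M hM] hh s a.
set e := sup _ in hh.
have hM' : forall y : S * A, `|h y.1 y.2| <= M by move=> y; exact: hM.
have he : e <= g * e.
  apply: ge_sup; first by exists (h s0 a0), (s0, a0).
  by move=> _ [y _ <-]; exact: hh.
have e0 : e <= 0 by nra.
apply: le_trans e0; exact: (sup_range_ub (s, a) hM').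
Qed.

Lemma arith_up (R : realType) (g X Y1 Y2 e u v : R) :
  g * X <= g * (2^-1 * (Y1 + Y2) + e) ->
  (u + v) / 2 + g * X - (u + g * Y1 + (v + g * Y2)) / 2 <= g * e.
Proof. lra. Qed.

Lemma arith_lo (R : realType) (g X Y1 Y2 Z e u v : R) :
  g * (2^-1 * (Y1 + Y2) + - e) <= g * (X + Z) ->
  (u + g * Y1 + (v + g * Y2)) / 2 - g * Z - ((u + v) / 2 + g * X) <= g * e.
Proof. lra. Qed.

Unset Implicit Arguments.
Set Strict Implicit.

Theorem lemma1 (R : realType) (dS dA : measure_display)
  (S : measurableType dS) (A : measurableType dA)
  (mu : {finite_measure set A -> \bar R})
  (P : S -> A -> probability S R) (gamma : R)
  (r1 r2 Q1 Q2 QC C : S -> A -> R) :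
  (0 < mu setT)%E ->
  0 < gamma < 1 ->
  bounded_SA r1 -> bounded_SA r2 ->
  is_opt_softQ mu P gamma r1 Q1 ->
  is_opt_softQ mu P gamma r2 Q2 ->
  is_opt_softQ mu P gamma (fun s a => (r1 s a + r2 s a) / 2) QC ->
  is_C_fixpoint mu P gamma Q1 Q2 C ->
  forall (s : S) (a : A),
    QC s a <= (Q1 s a + Q2 s a) / 2 /\
    (Q1 s a + Q2 s a) / 2 - C s a <= QC s a.
Proof.
move=> mu0 hg _ _ [bQ1 mQ1 fQ1] [bQ2 mQ2 fQ2] [bQC mQC fQC] [bC mF fC] s0 a0.
have g1 : goodQ Q1 by [].
have g2 : goodQ Q2 by [].
have gC : goodQ QC by [].
have gS := goodQ_avg g1 g2.
set QS := (fun s a => (Q1 s a + Q2 s a) / 2) in gS.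
have gV1 := softV_good mu0 g1; have gV2 := softV_good mu0 g2.
have gVC := softV_good mu0 gC; have gVS := softV_good mu0 gS.
have g0 : 0 < gamma by case/andP: hg.
have [M1 hM1] := bQ1; have [M2 hM2] := bQ2; have [MC hMC] := bQC.
have [Mc hMc] := bC.
split.
-
  suff H : forall s a, QC s a - QS s a <= 0.
    by have := H s0 a0; rewrite /QS; lra.
  apply: (contr s0 a0 hg).
    exists (MC + (M1 + M2) / 2) => s a; rewrite /QS.
    apply: le_trans (ler_normB _ _) _; apply: lerD => //.
    rewrite normrM (ger0_norm (_ : 0 <= 2^-1)) // ler_pM2r //.
    by apply: le_trans (ler_normD _ _) _; exact: lerD.
  move=> s a; set e := sup _.
  have bh : forall y : S * A, `|QC y.1 y.2 - QS y.1 y.2| <= MC + (M1 + M2) / 2.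
    move=> y; rewrite /QS.
    apply: le_trans (ler_normB _ _) _; apply: lerD => //.
    rewrite normrM (ger0_norm (_ : 0 <= 2^-1)) // ler_pM2r //.
    by apply: le_trans (ler_normD _ _) _; exact: lerD.
  have hV : forall s', softV mu QC s' <= softV mu QS s' + e.
    move=> s'; apply: softV_mono => // a'.
    have := sup_range_ub (s', a') bh; rewrite -/e /=.
    move: (QC s' a') (QS s' a') => u v; lra.
  have hE : Rintegral (P s a) setT (softV mu QC) <=
      Rintegral (P s a) setT (fun x => 2^-1 * (softV mu Q1 x + softV mu Q2 x) + e).
    apply: E_le => //.
      by apply: good_add; [apply: good_scale; exact: good_add | exact: good_cst].
    move=> x; have := hV x; have := softV_CS mu0 x g1 g2; rewrite -/QS.
    move: (softV mu QC x) (softV mu QS x) (softV mu Q1 x) (softV mu Q2 x) => u v w z.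
    lra.
  rewrite E_add in hE; last 2 first.
  - by apply: good_scale; exact: good_add.
  - exact: good_cst.
  rewrite E_scale ?E_add ?E_cst // in hE; last exact: good_add.
  have e1 := fQ1 s a; have e2 := fQ2 s a; have e3 := fQC s a.
  rewrite /soft_backup /expect in e1 e2 e3.
  rewrite /QS e1 e2 e3.
  move: hE; set X := Rintegral _ _ (softV mu QC).
  set Y1 := Rintegral _ _ (softV mu Q1); set Y2 := Rintegral _ _ (softV mu Q2).
  move=> hE.
  have : gamma * X <= gamma * (2^-1 * (Y1 + Y2) + e) by rewrite ler_pM2l.
  exact: arith_up.
-
  suff H : forall s a, QS s a - C s a - QC s a <= 0.
    by have := H s0 a0; rewrite /QS; lra.
  have bh : forall y : S * A,
      `|QS y.1 y.2 - C y.1 y.2 - QC y.1 y.2| <= (M1 + M2) / 2 + Mc + MC.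
    move=> y; rewrite /QS.
    apply: le_trans (ler_normB _ _) _; apply: lerD => //.
    apply: le_trans (ler_normB _ _) _; apply: lerD => //.
    rewrite normrM (ger0_norm (_ : 0 <= 2^-1)) // ler_pM2r //.
    by apply: le_trans (ler_normD _ _) _; exact: lerD.
  apply: (contr s0 a0 hg).
    by exists ((M1 + M2) / 2 + Mc + MC) => s a; exact: (bh (s, a)).
  move=> s a; set e := sup _.
  have hc : forall s' a', C s' a' <= sup (range (C s')).
    by move=> s' a'; apply: (sup_range_ub a' (hMc s')).
  have hcb : forall s', `|sup (range (C s'))| <= Mc.
    by move=> s'; apply: (sup_range_bd a0 (hMc s')).
  have hV : forall s', softV mu QS s' <= softV mu QC s' + (sup (range (C s')) + e).
    move=> s'; apply: softV_mono => // a'.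
    have := sup_range_ub (s', a') bh; rewrite -/e /=.
    have := hc s' a'.
    move: (QC s' a') (QS s' a') (C s' a') (sup (range (C s'))) => u v w z; lra.
  have FE : forall s', C_integrand mu Q1 Q2 C s' =
      softV mu Q1 s' + softV mu Q2 s' - 2 * softV mu QS s' + sup (range (C s')).
    by move=> s'; rewrite /C_integrand renyiE.
  have gD : good (fun x => softV mu Q1 x + softV mu Q2 x + (-2) * softV mu QS x).
    by apply: good_add; [exact: good_add | exact: good_scale].
  have gF : good (C_integrand mu Q1 Q2 C).
    split => //; have [_ [MD hMD]] := gD; exists (MD + Mc) => x.
    rewrite FE; apply: le_trans (ler_normD _ _) _; apply: lerD => //.
    by have := hMD x; rewrite mulNr.
  have hE : Rintegral (P s a) setT
        (fun x => 2^-1 * (softV mu Q1 x + softV mu Q2 x) + - e) <=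
      Rintegral (P s a) setT (fun x => softV mu QC x + C_integrand mu Q1 Q2 C x).
    apply: E_le => //.
      by apply: good_add; [apply: good_scale; exact: good_add | exact: good_cst].
      exact: good_add.
    move=> x; rewrite FE; have := hV x; have := softV_CS mu0 x g1 g2; rewrite -/QS.
    move: (softV mu QC x) (softV mu QS x) (softV mu Q1 x) (softV mu Q2 x)
      (sup (range (C x))) => u v w z y.
    lra.
  have eR : Rintegral (P s a) setT
      (fun x => softV mu QC x + C_integrand mu Q1 Q2 C x) =
      Rintegral (P s a) setT (softV mu QC) + Rintegral (P s a) setT (C_integrand mu Q1 Q2 C).
    exact: E_add.
  have eL : Rintegral (P s a) setT
        (fun x => 2^-1 * (softV mu Q1 x + softV mu Q2 x) + - e) =
      2^-1 * (Rintegral (P s a) setT (softV mu Q1) + Rintegral (P s a) setT (softV mu Q2)) - e.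
    rewrite E_add; last 2 first.
    - by apply: good_scale; exact: good_add.
    - exact: good_cst.
    rewrite E_scale; last exact: good_add.
    by rewrite E_add // E_cst.
  rewrite eR eL in hE.
  have e1 := fQ1 s a; have e2 := fQ2 s a; have e3 := fQC s a; have e4 := fC s a.
  rewrite /soft_backup /expect in e1 e2 e3; rewrite /C_backup /expect in e4.
  rewrite /QS e1 e2 e3 e4.
  move: hE; set X := Rintegral _ _ (softV mu QC).
  set Y1 := Rintegral _ _ (softV mu Q1); set Y2 := Rintegral _ _ (softV mu Q2).
  set Z := Rintegral _ _ (C_integrand _ _ _ _).
  move=> hE.
  have : gamma * (2^-1 * (Y1 + Y2) + - e) <= gamma * (X + Z) by rewrite ler_pM2l.
  exact: arith_lo.
Qed.
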